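(* Let $C$ be a program, let $F=\{f_1\preceq f_2\preceq\cdots\}$ be an $\omega$-chain in $\mathbb{T}$, let $f,g\in\mathbb{T}$, and let $u\in\mathbb{T}$ be a constant runtime. Then: (1) ($\omega$-continuity) $\mathsf{ert}[\![C]\!](\sup F)=\sup\{\mathsf{ert}[\![C]\!](f')\mid f'\in F\}$; (2) (monotonicity) $f\preceq g$ implies $\mathsf{ert}[\![C]\!](f)\preceq\mathsf{ert}[\![C]\!](g)$; (3) (sub-additivity) $\mathsf{ert}[\![C]\!](f+g)\preceq\mathsf{ert}[\![C]\!](f)+\mathsf{ert}[\![C]\!](g)$; (4) (constant propagation) $\mathsf{ert}[\![C]\!](u+f)\preceq u+\mathsf{ert}[\![C]\!](f)$.
   Context: States and programs. Fix a finite set $\mathrm{Vars}$ of variables; values are $\mathbb{N}$, locations are $\mathbb{N}_{>0}$. A stack is $s\colon \mathrm{Vars}\to\mathbb{N}$; a heap is a partial map $h$ from a finite set $\mathrm{dom}(h)\subseteq\mathbb{N}_{>0}$ to $\mathbb{N}$. $h_1\perp h_2$ means disjoint domains; then $h_1\star h_2$ is their union; $h_\emptyset$ is the empty heap. $\mathsf{States}$ is the set of pairs $(s,h)$. $s(e)$ is the value of a (heap-independent) arithmetic expression $e$ under $s$, $s\models\varphi$ means the Boolean expression $\varphi$ holds under $s$, $s[x\mapsto v]$ is the updated stack. Programs are generated by $C ::= \mathtt{tick}(e) \mid x:=e \mid x:=\mathtt{alloc}(e) \mid \langle e\rangle:=e' \mid x:=\langle e\rangle \mid \mathtt{free}(e)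 \mid \{C\}[p]\{C\} \mid \mathtt{if}(\varphi)\{C\}\mathtt{else}\{C\} \mid C;C \mid \mathtt{while}(\varphi)\{C\}$, where $p$ is an expression with $s(p)\in[0,1]\cap\mathbb{Q}$ for all $s$. Runtimes. $\mathbb{T}$ is the set of functions $\mathsf{States}\to[0,\infty]$, ordered pointwise by $\preceq$ (suprema pointwise); arithmetic is pointwise with $0\cdot\infty=0$. $[\varphi]$ is the $0/1$-valued Iverson bracket. Truncated subtraction: $a\dot- b=\max(a-b,0)$, $\infty\dot- b=\infty$ for finite $b$, $a\dot-\infty=0$. $(f\oplus g)(s,h)=\min\{f(s,h_1)+g(s,h_2)\mid h=h_1\star h_2\}$; $(f \mathbin{-\!\!\ominus} g)(s,h)=\sup\{g(s,h\star h')\dot- f(s,h')\mid h'\perp h\}$; $(\inf y\colon f)(s,h)=\inf_{v\in\mathbb{N}} f(s[y\mapsto v],h)$, $(\sup y\colon f)(s,h)=\sup_{v\in\mathbb{N}}f(s[y\mapsto v],h)$; $f[x/e](s,h)=f(s[x\mapsto s(e)],h)$. $\mathsf{tm}(e)(s,h)=s(e)$ if $h=h_\emptyset$, else $\infty$; $[e\mapsto e'](s,h)=0$ if $\mathrm{dom}(h)=\{s(e)\}$ and $h(s(e))=s(e')$, else $\infty$; $[e\mapsto -](s,h)=0$ if $\mathrm{dom}(h)=\{s(e)\}$, else $\infty$; $\bigoplus_{i=1}^{e} f_i$ is the separating sum over $i=1,\dots,s(e)$ (empty one: $[\mathsf{emp}]$, which is $0$ if $h=h_\emptyset$, else $\infty$).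 Expected runtime transformer $\mathsf{ert}[\![C]\!]\colon\mathbb{T}\to\mathbb{T}$ (with $v$ fresh): $\mathsf{ert}[\![\mathtt{tick}(e)]\!](f)=\mathsf{tm}(e)\oplus f$; $\mathsf{ert}[\![x:=e]\!](f)=f[x/e]$; $\mathsf{ert}[\![x:=\mathtt{alloc}(e)]\!](f)=\sup v\colon (\bigoplus_{i=1}^{e}[v+i-1\mapsto 0])\mathbin{-\!\!\ominus} f[x/v]$; $\mathsf{ert}[\![\langle e\rangle:=e']\!](f)=[e\mapsto-]\oplus([e\mapsto e']\mathbin{-\!\!\ominus} f)$; $\mathsf{ert}[\![x:=\langle e\rangle]\!](f)=\inf v\colon [e\mapsto v]\oplus([e\mapsto v]\mathbin{-\!\!\ominus} f[x/v])$; $\mathsf{ert}[\![\mathtt{free}(e)]\!](f)=[e\mapsto-]\oplus f$; $\mathsf{ert}[\![C_1;C_2]\!](f)=\mathsf{ert}[\![C_1]\!](\mathsf{ert}[\![C_2]\!](f))$; conditional: $[\varphi]\cdot\mathsf{ert}[\![C_1]\!](f)+[\neg\varphi]\cdot\mathsf{ert}[\![C_2]\!](f)$; probabilistic choice: $p\cdot\mathsf{ert}[\![C_1]\!](f)+(1-p)\cdot\mathsf{ert}[\![C_2]\!](f)$; $\mathsf{ert}[\![\mathtt{while}(\varphi)\{C\}]\!](f)=\mathrm{lfp}\, g.\ [\neg\varphi]\cdot f+[\varphi]\cdot\mathsf{ert}[\![C]\!](g)$ (least fixed point in $(\mathbb{T},\preceq)$). *)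

(* Defs.v *)
(* runtimes are functions into the extended reals
   \bar R over an arbitrary realType R, restricted to nonnegative values. *)
From HB Require Import structures.
From mathcomp Require Import all_boot all_order all_algebra.
From mathcomp Require Import all_classical all_reals all_analysis.
Set Implicit Arguments. Unset Strict Implicit. Unset Printing Implicit Defensive.
Import Order.TTheory GRing.Theory Num.Theory.
Local Open Scope classical_set_scope.
Local Open Scope ereal_scope.

Section ERT.
Variable R : realType.
Variable Vars : finType.

Definition stack := Vars -> nat.
Definition upd (s : stack) (x : Vars) (v : nat) : stack :=
  fun y => if y == x then v else s y.

Record heap := Heap {
  hfun : nat -> option nat;
  hfin : exists n, forall l, (n <= l)%N -> hfun l = None;
  hpos : hfun 0%N = None }.

Definition disj (h1 h2 : heap) := forall l, hfun h1 l = None \/ hfun h2 l = None.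
Definition is_union (h h1 h2 : heap) :=
  forall l, hfun h l = match hfun h1 l with Some v => Some v | None => hfun h2 l end.
Definition is_emp (h : heap) := forall l, hfun h l = None.

Definition state := (stack * heap)%type.
Definition runtime := state -> \bar R.

Definition aexp := stack -> nat.
Definition bexp := stack -> bool.
Definition pexp := stack -> rat.

Inductive prog :=
| Tick of aexp
| Assign of Vars & aexp
| Alloc of Vars & aexp
| Store of aexp & aexp
| Lookup of Vars & aexp
| Free of aexp
| PChoice of prog & pexp & prog
| Ite of bexp & prog & prog
| Seq of prog & prog
| While of bexp & prog.

Fixpoint prog_wf (C : prog) : Prop :=
  match C with
  | PChoice C1 p C2 => (forall s, (0 <= p s <= 1)%R) /\ prog_wf C1 /\ prog_wf C2
  | Ite _ C1 C2 | Seq C1 C2 => prog_wf C1 /\ prog_wf C2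
  | While _ C1 => prog_wf C1
  | _ => True
  end.

Definition nonneg (f : runtime) := forall st, 0 <= f st.
Definition rle (f g : runtime) := forall st, f st <= g st.
Definition radd (f g : runtime) : runtime := fun st => f st + g st.
Definition supT (F : nat -> runtime) : runtime :=
  fun st => ereal_sup (range (fun n => F n st)).

Definition iverson (b : bool) : \bar R := if b then 1 else 0.

Definition tsub (a b : \bar R) : \bar R :=
  if b == +oo then 0 else Order.max (a - b) 0.

Definition sepadd (f g : runtime) : runtime := fun st =>
  ereal_inf [set r | exists h1 h2, disj h1 h2 /\ is_union st.2 h1 h2 /\
                                   r = f (st.1, h1) + g (st.1, h2)].

Definition wand (f g : runtime) : runtime := fun st =>
  ereal_sup [set r | exists h' hu, disj st.2 h' /\ is_union hu st.2 h' /\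
                                   r = tsub (g (st.1, hu)) (f (st.1, h'))].

Definition inf_nat (f : nat -> runtime) : runtime := fun st =>
  ereal_inf [set f v st | v in [set: nat]].
Definition sup_nat (f : nat -> runtime) : runtime := fun st =>
  ereal_sup [set f v st | v in [set: nat]].

Definition subst (f : runtime) (x : Vars) (e : aexp) : runtime :=
  fun st => f (upd st.1 x (e st.1), st.2).

Definition tm (e : aexp) : runtime := fun st =>
  if `[< is_emp st.2 >] then ((e st.1)%:R)%:E else +oo.

Definition pointsto (e e' : aexp) : runtime := fun st =>
  if `[< forall l, hfun st.2 l = if l == e st.1 then Some (e' st.1) else None >]
  then 0 else +oo.

Definition pointsto_any (e : aexp) : runtime := fun st =>
  if `[< (forall l, l <> e st.1 -> hfun st.2 l = None) /\ hfun st.2 (e st.1) <> None >]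
  then 0 else +oo.

Definition emp : runtime := fun st => if `[< is_emp st.2 >] then 0 else +oo.

(* separating sum over i = 1 .. n *)
Fixpoint sepsum (n : nat) (F : nat -> runtime) : runtime :=
  match n with
  | 0%N => emp
  | n'.+1 => sepadd (sepsum n' F) (F n'.+1)
  end.
Definition bigsep (e : aexp) (F : nat -> runtime) : runtime :=
  fun st => sepsum (e st.1) F st.

(* least fixed point in the complete lattice of nonnegative runtimes:
   meet of all prefixed points (Knaster-Tarski) *)
Definition lfp (Phi : runtime -> runtime) : runtime := fun st =>
  ereal_inf [set g st | g in [set g | nonneg g /\ rle (Phi g) g]].

Fixpoint ert (C : prog) (f : runtime) : runtime :=
  match C with
  | Tick e => sepadd (tm e) f
  | Assign x e => subst f x e
  | Alloc x e => sup_nat (fun v =>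
      wand (bigsep e (fun i => pointsto (fun _ => (v + i - 1)%N) (fun _ => 0%N)))
           (subst f x (fun _ => v)))
  | Store e e' => sepadd (pointsto_any e) (wand (pointsto e e') f)
  | Lookup x e => inf_nat (fun v =>
      sepadd (pointsto e (fun _ => v))
             (wand (pointsto e (fun _ => v)) (subst f x (fun _ => v))))
  | Free e => sepadd (pointsto_any e) f
  | PChoice C1 p C2 => fun st =>
      ((ratr (p st.1))%:E * ert C1 f st) + ((1 - ratr (p st.1))%:E * ert C2 f st)
  | Ite phi C1 C2 => fun st =>
      iverson (phi st.1) * ert C1 f st + iverson (~~ phi st.1) * ert C2 f st
  | Seq C1 C2 => ert C1 (ert C2 f)
  | While phi C1 => lfp (fun g st =>
      iverson (~~ phi st.1) * f st + iverson (phi st.1) * ert C1 g st)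
  end.

End ERT.

(* Main.v *)
Require Import Defs.
From mathcomp Require Import all_boot all_order all_algebra.
From mathcomp Require Import all_classical all_reals all_analysis.
Import Order.TTheory GRing.Theory Num.Theory.
Local Open Scope classical_set_scope.
Local Open Scope ereal_scope.

Section Esup.
Context {R : realType}.
Definition esup (u : nat -> \bar R) := ereal_sup (range u).

Lemma esup_ub u n : u n <= esup u.
Proof. by apply: ereal_sup_ubound; exists n. Qed.

Lemma esup_le u c : (forall n, u n <= c) -> esup u <= c.
Proof. by move=> H; apply: ge_ereal_sup => _ [n _ <-]. Qed.

Lemma esup_mono u v : (forall n, u n <= v n) -> esup u <= esup v.
Proof. by move=> H; apply: esup_le => n; apply: le_trans (H n) (esup_ub v n). Qed.

Lemma esup_cst c : esup (fun _ => c) = c.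
Proof. by apply/eqP; rewrite eq_le esup_le //= (esup_ub (fun _ => c) 0). Qed.

Lemma esup_ge0 u : (forall n, 0 <= u n) -> 0 <= esup u.
Proof. by move=> H; apply: le_trans (H 0%N) (esup_ub u 0). Qed.

Lemma esup_swap (a : nat -> nat -> \bar R) :
  esup (fun k => esup (fun n => a k n)) = esup (fun n => esup (fun k => a k n)).
Proof.
apply/eqP; rewrite eq_le; apply/andP; split; apply: esup_le => k; apply: esup_le => n.
- apply: (le_trans (esup_ub (fun k => a k n) k)).
  exact: (esup_ub (fun n => esup (fun k => a k n)) n).
- apply: (le_trans (esup_ub (fun k' => a n k') k)).
  exact: (esup_ub (fun k => esup (fun n => a k n)) n).
Qed.

Lemma esup_lim u : nondecreasing_seq u -> lim (u @ \oo) = esup u.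
Proof. by move=> H; apply: cvg_lim => //; exact: ereal_nondecreasing_cvgn. Qed.

Lemma esup_add u v : nondecreasing_seq u -> nondecreasing_seq v ->
  (forall n, 0 <= u n) -> (forall n, 0 <= v n) ->
  esup (fun n => u n + v n) = esup u + esup v.
Proof.
move=> Hu Hv Pu Pv.
have Huv : nondecreasing_seq (fun n => u n + v n).
  by move=> m n mn; apply: leeD; [apply: Hu|apply: Hv].
rewrite -(@esup_lim (fun n => u n + v n) Huv); apply: cvg_lim => //.
  apply: cvgeD; first by apply: ge0_adde_def; rewrite inE; apply: esup_ge0.
  + exact: ereal_nondecreasing_cvgn.
  + exact: ereal_nondecreasing_cvgn.
Qed.

Lemma esup_addl c u : 0 <= c -> nondecreasing_seq u -> (forall n, 0 <= u n) ->
  esup (fun n => c + u n) = c + esup u.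
Proof.
move=> c0 Hu Pu; rewrite (@esup_add (fun _ => c) u) ?esup_cst //.
Qed.

Lemma esup_scale (c : R) u : (0 <= c)%R ->
  esup (fun n => c%:E * u n) = c%:E * esup u.
Proof.
move=> c0; rewrite /esup -ereal_supZl //; last by apply/set0P; exists (u 0%N), 0%N.
by congr ereal_sup; rewrite -image_comp.
Qed.

Lemma esup_shift u : nondecreasing_seq u -> esup (fun n => u n.+1) = esup u.
Proof.
move=> Hu; apply/eqP; rewrite eq_le; apply/andP; split.
- by apply: esup_le => n; apply: esup_ub.
- by apply: esup_le => n; apply: le_trans (esup_ub _ n); apply: Hu.
Qed.
End Esup.

Set Implicit Arguments. Unset Strict Implicit.
Section Heaps.
Variable R : realType.
Variable Vars : finType.
Local Notation runtime := (runtime R Vars).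
Local Notation heap := heap.

Lemma heap_ext (h h' : heap) : (forall l, hfun h l = hfun h' l) -> h = h'.
Proof.
case: h => f1 p1 q1; case: h' => f2 p2 q2 /= E.
have E' : f1 = f2 by apply: funext.
subst f2; congr Heap; exact: Prop_irrelevance.
Qed.

Definition h0 : heap.
Proof. by refine (@Heap (fun _ => None) _ _) => //; exists 0%N. Defined.

Definition split (h h1 h2 : heap) := disj h1 h2 /\ is_union h h1 h2.

Lemma split0 h : split h h h0.
Proof. by split=> l; [right|rewrite /=; case: (hfun h l)]. Qed.

Lemma split_h2 h h1 h2 l : split h h1 h2 ->
  hfun h2 l = if hfun h1 l is Some _ then None else hfun h l.
Proof.
move=> [D U]; rewrite U; case: (D l) => ->//.
by case: (hfun h1 l).
Qed.

Definition precise (a : runtime) := forall s h h1 h2 h1' h2',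
  split h h1 h2 -> split h h1' h2' -> a (s, h1) != +oo -> a (s, h1') != +oo ->
  h1 = h1' /\ h2 = h2'.

Lemma precise_of (a : runtime) (D : stack Vars -> heap -> nat -> option nat) :
  (forall s h h1 h2, split h h1 h2 -> a (s, h1) != +oo -> forall l, hfun h1 l = D s h l) ->
  precise a.
Proof.
move=> HD s h h1 h2 h1' h2' S1 S2 A1 A2.
have E1 : h1 = h1'.
  by apply: heap_ext => l; rewrite (HD _ _ _ _ S1 A1) (HD _ _ _ _ S2 A2).
split=> //; subst h1'; apply: heap_ext => l.
by rewrite (split_h2 l S1) (split_h2 l S2).
Qed.

Definition zo (b : runtime) := forall st, b st = 0 \/ b st = +oo.

Lemma zo_ge0 (b : runtime) : zo b -> nonneg b.
Proof. by move=> Z st; case: (Z st) => ->; rewrite ?leey. Qed.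

Lemma sepadd_ge0 (a f : runtime) : nonneg a -> nonneg f -> nonneg (sepadd a f).
Proof.
move=> Pa Pf st; apply: le_ereal_inf_tmp => _ [h1 [h2 [_ [_ ->]]]].
exact: adde_ge0.
Qed.

Lemma sepadd_mono (a f g : runtime) : rle f g -> rle (sepadd a f) (sepadd a g).
Proof.
move=> fg st; apply: le_ereal_inf_tmp => _ [h1 [h2 [D [U ->]]]].
apply: ge_ereal_inf; exists (a (st.1, h1) + f (st.1, h2)).
  by exists h1, h2.
exact: leeD2l.
Qed.

Lemma sepadd_oo (a f : runtime) st : nonneg f ->
  (forall h1 h2, split st.2 h1 h2 -> a (st.1, h1) = +oo) -> sepadd a f st = +oo.
Proof.
move=> Pf H; apply/eqP; rewrite eq_le leey /=.
apply: le_ereal_inf_tmp => _ [h1 [h2 [D [U ->]]]].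
rewrite (H h1 h2); last by split.
rewrite addye// gt_eqF// (lt_le_trans _ (Pf (st.1, h2)))//.
Qed.

Lemma sepadd_one (a f : runtime) st h1 h2 : nonneg f -> split st.2 h1 h2 ->
  (forall h1' h2', split st.2 h1' h2' -> a (st.1, h1') != +oo -> h1' = h1 /\ h2' = h2) ->
  sepadd a f st = a (st.1, h1) + f (st.1, h2).
Proof.
move=> Pf [D U] H; apply/eqP; rewrite eq_le; apply/andP; split.
  by apply: ereal_inf_lbound; exists h1, h2.
apply: le_ereal_inf_tmp => _ [h1' [h2' [D' [U' ->]]]].
have [E|NE] := eqVneq (a (st.1, h1')) +oo.
  by rewrite E addye ?leey// gt_eqF// (lt_le_trans _ (Pf (st.1, h2')))//.
by have [-> ->] := H h1' h2' (conj D' U') NE.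
Qed.

Lemma sepadd_cases (a : runtime) st : precise a ->
  (exists h1 h2, split st.2 h1 h2 /\
     forall f, nonneg f -> sepadd a f st = a (st.1, h1) + f (st.1, h2)) \/
  (forall f, nonneg f -> sepadd a f st = +oo).
Proof.
move=> Pr.
have [[h1 [h2 [S1 A1]]]|N] := pselect (exists h1 h2, split st.2 h1 h2 /\ a (st.1, h1) != +oo).
  left; exists h1, h2; split=> // f Pf; apply: sepadd_one => // h1' h2' S2 A2.
  by have [-> ->] := Pr _ _ _ _ _ _ S2 S1 A2 A1.
right=> f Pf; apply: sepadd_oo => // h1 h2 S.
by apply/eqP; apply: contra_notT N => NE; exists h1, h2.
Qed.

Lemma sepadd_zo (a f : runtime) : zo a -> zo f -> zo (sepadd a f).
Proof.
move=> Za Zf st.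
have [[h1 [h2 [D [U E]]]]|N] := pselect (exists h1 h2, disj h1 h2 /\ is_union st.2 h1 h2 /\
    a (st.1, h1) + f (st.1, h2) = 0).
  left; apply/eqP; rewrite eq_le; apply/andP; split.
    by apply: ge_ereal_inf; exists 0 => //; exists h1, h2.
  exact: sepadd_ge0 (zo_ge0 Za) (zo_ge0 Zf) st.
right; apply/eqP; rewrite eq_le leey /=.
apply: le_ereal_inf_tmp => _ [h1 [h2 [D [U ->]]]].
case: (Za (st.1, h1)) => Ea; case: (Zf (st.1, h2)) => Ef; rewrite Ea Ef //.
by exfalso; apply: N; exists h1, h2; rewrite Ea Ef adde0.
Qed.

Lemma tsub_ge0 (x c : \bar R) : 0 <= tsub x c.
Proof. by rewrite /tsub; case: ifP => // _; rewrite le_max lexx orbT. Qed.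

Lemma tsub0 (x : \bar R) : 0 <= x -> tsub x 0 = x.
Proof.
move=> x0; rewrite /tsub /= sube0; exact/max_idPl.
Qed.

Lemma tsuby (x : \bar R) : tsub x +oo = 0.
Proof. by rewrite /tsub eqxx. Qed.

Lemma wand_ge0 (b g : runtime) : nonneg (wand b g).
Proof.
move=> st; apply: le_ereal_sup_tmp; exists (tsub (g (st.1, st.2)) (b (st.1, h0))).
  by exists h0, st.2; have [D U] := split0 st.2; split.
exact: tsub_ge0.
Qed.

Lemma wand_mono (b f g : runtime) : zo b -> rle f g -> rle (wand b f) (wand b g).
Proof.
move=> Zb fg st; apply: ge_ereal_sup => _ [h' [hu [D [U ->]]]].
apply: le_ereal_sup_tmp; exists (tsub (g (st.1, hu)) (b (st.1, h'))).
  by exists h', hu.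
case: (Zb (st.1, h')) => ->; last by rewrite !tsuby.
rewrite /tsub /= !sube0.
exact: le_max2.
Qed.

Definition chain (F : nat -> runtime) :=
  (forall n, nonneg (F n)) /\ (forall n, rle (F n) (F n.+1)).

Lemma chain_nd (F : nat -> runtime) st : chain F -> nondecreasing_seq (fun n => F n st).
Proof.
move=> [_ H]; apply: (homo_leq (r := fun x y : \bar R => x <= y)).
- by move=> x.
- by move=> y x z; apply: le_trans.
- by move=> n; apply: H.
Qed.

Lemma supT_ge0 (F : nat -> runtime) : chain F -> nonneg (supT F).
Proof. by move=> [P _] st; apply: (@esup_ge0 _ (fun n => F n st)) => n; apply: P. Qed.

Lemma supT_ub (F : nat -> runtime) n : rle (F n) (supT F).
Proof. by move=> st; exact: (esup_ub (fun n => F n st) n). Qed.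

Definition good (T : runtime -> runtime) :=
 [/\ forall f, nonneg f -> nonneg (T f),
     forall f g, nonneg f -> nonneg g -> rle f g -> rle (T f) (T g),
     forall F, chain F -> forall st, T (supT F) st = esup (fun n => T (F n) st),
     forall f g, nonneg f -> nonneg g -> rle (T (radd f g)) (radd (T f) (T g)) &
     forall u f, 0 <= u -> nonneg f ->
       rle (T (radd (fun _ => u) f)) (radd (fun _ => u) (T f))].

Lemma good_chain (T : runtime -> runtime) (F : nat -> runtime) : good T -> chain F -> chain (fun n => T (F n)).
Proof.
move=> [P M _ _ _] [PF MF]; split=> n; first exact: P.
by apply: M => //; apply: MF.
Qed.

Lemma good_supT (T : runtime -> runtime) (F : nat -> runtime) : good T -> chain F -> T (supT F) = supT (fun n => T (F n)).
Proof. by move=> [_ _ C _ _] HF; apply: funext => st; rewrite C. Qed.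

Lemma radd_ge0 (f g : runtime) : nonneg f -> nonneg g -> nonneg (radd f g).
Proof. by move=> Pf Pg st; apply: adde_ge0. Qed.

Lemma cst_ge0 (u : \bar R) : 0 <= u -> nonneg (fun _ : state Vars => u).
Proof. by move=> u0 st. Qed.

Lemma wand_lb (b g : runtime) st h' hu : disj st.2 h' -> is_union hu st.2 h' ->
  tsub (g (st.1, hu)) (b (st.1, h')) <= wand b g st.
Proof. by move=> D U; apply: ereal_sup_ubound; exists h', hu. Qed.

Lemma wand_cont (b : runtime) (G : nat -> runtime) st : zo b -> chain G ->
  wand b (supT G) st = esup (fun n => wand b (G n) st).
Proof.
move=> Zb HG; have [PG _] := HG.
apply/eqP; rewrite eq_le; apply/andP; split.
  apply: ge_ereal_sup => _ [h' [hu [D [U ->]]]].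
  case: (Zb (st.1, h')) => E; rewrite E; last by rewrite tsuby; apply: esup_ge0 => n; apply: wand_ge0.
  rewrite tsub0; last exact: supT_ge0.
  apply: esup_mono => n.
  by have := wand_lb b (G n) D U; rewrite E tsub0 //; apply: PG.
apply: esup_le => n; apply: wand_mono => //; exact: supT_ub.
Qed.

Lemma wand_add (b f g : runtime) : zo b -> nonneg f -> nonneg g ->
  rle (wand b (radd f g)) (radd (wand b f) (wand b g)).
Proof.
move=> Zb Pf Pg st; apply: ge_ereal_sup => _ [h' [hu [D [U ->]]]].
case: (Zb (st.1, h')) => E; rewrite E; last by rewrite tsuby; apply: adde_ge0; apply: wand_ge0.
rewrite tsub0; last exact: adde_ge0.
apply: leeD.
- by have := wand_lb b (f) D U; rewrite E tsub0.
- by have := wand_lb b (g) D U; rewrite E tsub0.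
Qed.

Lemma wand_const (b : runtime) u (f : runtime) : zo b -> 0 <= u -> nonneg f ->
  rle (wand b (radd (fun _ => u) f)) (radd (fun _ => u) (wand b f)).
Proof.
move=> Zb u0 Pf st; apply: ge_ereal_sup => _ [h' [hu [D [U ->]]]].
case: (Zb (st.1, h')) => E; rewrite E; last by rewrite tsuby; apply: adde_ge0 => //; apply: wand_ge0.
rewrite tsub0; last exact: adde_ge0.
apply: leeD2l.
by have := wand_lb b (f) D U; rewrite E tsub0.
Qed.

Lemma good_wand (b : runtime) (T : runtime -> runtime) : zo b -> good T -> good (fun f => wand b (T f)).
Proof.
move=> Zb GT; have [P M C A K] := GT; split.
- by move=> f _; apply: wand_ge0.
- by move=> f g Pf Pg fg; apply: wand_mono => //; apply: M.
- move=> F HF st; rewrite (good_supT GT HF) wand_cont //; exact: good_chain.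
- move=> f g Pf Pg st; apply: le_trans (wand_add Zb (P _ Pf) (P _ Pg) st).
  by apply: wand_mono => //; apply: A.
- move=> u f u0 Pf st; apply: le_trans (wand_const Zb u0 (P _ Pf) st).
  by apply: wand_mono => //; apply: K.
Qed.

Lemma good_sepadd (a : runtime) (T : runtime -> runtime) : precise a -> nonneg a -> good T -> good (fun f => sepadd a (T f)).
Proof.
move=> Pr Pa GT; have [P M C A K] := GT; split.
- by move=> f Pf; apply: sepadd_ge0 => //; apply: P.
- by move=> f g Pf Pg fg; apply: sepadd_mono; apply: M.
- move=> F HF st /=; rewrite (good_supT GT HF).
  have HG := good_chain GT HF.
  case: (sepadd_cases st Pr) => [[h1 [h2 [S E]]]|E].
  + rewrite E; last exact: supT_ge0.
    have -> : (fun n => sepadd a (T (F n)) st) = (fun n => a (st.1, h1) + T (F n) (st.1, h2)).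
      by apply: funext => n; rewrite E //; exact: HG.1.
    apply: esym; apply: esup_addl; [exact: Pa|exact: (chain_nd (st.1,h2) HG)|by move=> n; apply: HG.1].
  + rewrite E; last exact: supT_ge0.
    have -> : (fun n => sepadd a (T (F n)) st) = (fun n => +oo).
      by apply: funext => n; rewrite E //; exact: HG.1.
    by rewrite esup_cst.
- move=> f g Pf Pg st; apply: le_trans (sepadd_mono _ (A _ _ Pf Pg) st) _.
  have Pfg := radd_ge0 (P _ Pf) (P _ Pg).
  case: (sepadd_cases st Pr) => [[h1 [h2 [S E]]]|E];
    rewrite /radd (E _ Pfg) (E _ (P _ Pf)) (E _ (P _ Pg)).
  + rewrite addeACA; apply: leeD2r; apply: leeDl; exact: Pa.
  + by rewrite addye.
- move=> u f u0 Pf st; apply: le_trans (sepadd_mono _ (K _ _ u0 Pf) st) _.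
  have Pfg := radd_ge0 (cst_ge0 u0) (P _ Pf).
  case: (sepadd_cases st Pr) => [[h1 [h2 [S E]]]|E];
    rewrite /radd (E _ Pfg) (E _ (P _ Pf)).
  + by rewrite addeCA.
  + by rewrite addey // gt_eqF // (lt_le_trans _ u0).
Qed.

Lemma good_id : good id.
Proof. by split=> //= f g _ _ []. Qed.

Lemma good_subst x (e : aexp Vars) : good (fun f => subst f x e).
Proof.
split.
- by move=> f Pf st; apply: Pf.
- by move=> f g _ _ fg st; apply: fg.
- by [].
- by move=> f g _ _ st.
- by move=> u f _ _ st.
Qed.

Lemma good_comp (T1 T2 : runtime -> runtime) : good T1 -> good T2 -> good (fun f => T1 (T2 f)).
Proof.
move=> G1 G2; have [P1 M1 C1 A1 K1] := G1; have [P2 M2 C2 A2 K2] := G2; split.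
- by move=> f Pf; apply: P1; apply: P2.
- by move=> f g Pf Pg fg; apply: M1; [exact: P2|exact: P2|exact: M2].
- by move=> F HF st; rewrite (good_supT G2 HF) C1 //; apply: good_chain.
- move=> f g Pf Pg st; apply: le_trans (A1 _ _ (P2 _ Pf) (P2 _ Pg) st).
  apply: M1; [exact: P2 (radd_ge0 Pf Pg)|exact: radd_ge0 (P2 _ Pf) (P2 _ Pg)|exact: A2].
- move=> u f u0 Pf st; apply: le_trans (K1 _ _ u0 (P2 _ Pf) st).
  apply: M1; [exact: P2 (radd_ge0 (cst_ge0 u0) Pf)|exact: radd_ge0 (cst_ge0 u0) (P2 _ Pf)|exact: K2].
Qed.

Lemma good_supnat (S : nat -> runtime -> runtime) : (forall v, good (S v)) ->
  good (fun f => sup_nat (fun v => S v f)).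
Proof.
move=> GS; split.
- move=> f Pf st; apply: (@esup_ge0 _ (fun v => S v f st)) => v.
  by have [P _ _ _ _] := GS v; apply: P.
- move=> f g Pf Pg fg st; apply: (@esup_mono _ (fun v => S v f st) (fun v => S v g st)) => v.
  by have [_ M _ _ _] := GS v; apply: M.
- move=> F HF st.
  change (esup (fun v => S v (supT F) st) = esup (fun n => esup (fun v => S v (F n) st))).
  rewrite -esup_swap; congr esup; apply: funext => v.
  by have [_ _ C _ _] := GS v; apply: C.
- move=> f g Pf Pg st.
  apply: (@esup_le _ (fun v => S v (radd f g) st)) => v.
  have [_ _ _ A _] := GS v; apply: le_trans (A _ _ Pf Pg st) _.
  by apply: leeD; [exact: (esup_ub (fun v => S v f st))|exact: (esup_ub (fun v => S v g st))].
- move=> u f u0 Pf st.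
  apply: (@esup_le _ (fun v => S v (radd (fun _ => u) f) st)) => v.
  have [_ _ _ _ K] := GS v; apply: le_trans (K _ _ u0 Pf st) _.
  by apply: leeD2l; exact: (esup_ub (fun v => S v f st)).
Qed.

Lemma good_pointwise (I : Type) (S : I -> runtime -> runtime) (T : runtime -> runtime)
    (v0 : state Vars -> I) :
  (forall v, good (S v)) -> (forall f, nonneg f -> forall st, T f st = S (v0 st) f st) ->
  good T.
Proof.
move=> GS E; split.
- move=> f Pf st; rewrite E //; have [P _ _ _ _] := GS (v0 st); exact: P.
- move=> f g Pf Pg fg st; rewrite !E //; have [_ M _ _ _] := GS (v0 st); exact: M.
- move=> F HF st; rewrite E; last exact: supT_ge0.
  have [_ _ C _ _] := GS (v0 st); rewrite C //; congr esup; apply: funext => n.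
  by rewrite E //; apply: HF.1.
- move=> f g Pf Pg st; rewrite /radd !E //; last exact: radd_ge0.
  have [_ _ _ A _] := GS (v0 st); exact: A.
- move=> u f u0 Pf st; rewrite /radd !E //; last exact: radd_ge0.
  have [_ _ _ _ K] := GS (v0 st); exact: K.
Qed.

Lemma iteE (b : bool) (x y : \bar R) : iverson R b * x + iverson R (~~ b) * y = if b then x else y.
Proof. by case: b; rewrite /iverson /= mul1e mul0e ?adde0 ?add0e. Qed.

Lemma good_ite (phi : bexp Vars) (T1 T2 : runtime -> runtime) : good T1 -> good T2 ->
  good (fun f st => iverson R (phi st.1) * T1 f st + iverson R (~~ phi st.1) * T2 f st).
Proof.
move=> G1 G2.
apply: (@good_pointwise bool (fun b => if b then T1 else T2) _ (fun st => phi st.1)).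
- by case.
- by move=> f _ st; rewrite iteE; case: (phi st.1).
Qed.

Lemma good_pchoice (p : stack Vars -> R) (T1 T2 : runtime -> runtime) :
  (forall s, (0 <= p s <= 1)%R) -> good T1 -> good T2 ->
  good (fun f st => (p st.1)%:E * T1 f st + (1 - p st.1)%:E * T2 f st).
Proof.
move=> Hp G1 G2; have [P1 M1 C1 A1 K1] := G1; have [P2 M2 C2 A2 K2] := G2.
have p0 s : (0 <= p s)%R by case/andP: (Hp s).
have q0 s : (0 <= 1 - p s)%R by case/andP: (Hp s) => _; rewrite subr_ge0.
split.
- by move=> f Pf st; apply: adde_ge0; apply: mule_ge0; rewrite ?lee_fin //; [apply: P1|apply: P2].
- by move=> f g Pf Pg fg st; apply: leeD; apply: lee_wpmul2l; rewrite ?lee_fin //; [apply: M1|apply: M2].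
- move=> F HF st; rewrite C1 // C2 // -!esup_scale //.
  have HG1 := good_chain G1 HF; have HG2 := good_chain G2 HF.
  rewrite -esup_add //.
  + by move=> m n mn; apply: lee_wpmul2l; rewrite ?lee_fin //; apply: (chain_nd st HG1).
  + by move=> m n mn; apply: lee_wpmul2l; rewrite ?lee_fin //; apply: (chain_nd st HG2).
  + by move=> n; apply: mule_ge0; rewrite ?lee_fin //; apply: HG1.1.
  + by move=> n; apply: mule_ge0; rewrite ?lee_fin //; apply: HG2.1.
- move=> f g Pf Pg st; rewrite /radd.
  apply: le_trans (leeD (lee_wpmul2l _ (A1 _ _ Pf Pg st)) (lee_wpmul2l _ (A2 _ _ Pf Pg st))) _;
    rewrite ?lee_fin //.
  rewrite /radd !ge0_muleDr; try by [apply: P1|apply: P2].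
  by rewrite addeACA.
- move=> u f u0 Pf st; rewrite /radd.
  apply: le_trans (leeD (lee_wpmul2l _ (K1 _ _ u0 Pf st)) (lee_wpmul2l _ (K2 _ _ u0 Pf st))) _;
    rewrite ?lee_fin //.
  rewrite /radd !ge0_muleDr //; try by [apply: P1|apply: P2].
  rewrite addeACA -ge0_muleDl ?lee_fin // -EFinD.
  have -> : (p st.1 + (1 - p st.1))%R = 1%R by rewrite addrC subrK.
  by rewrite mul1e.
Qed.

Section Lfp.
Variable Phi : runtime -> runtime.

Lemma lfp_lb g : nonneg g -> rle (Phi g) g -> rle (lfp Phi) g.
Proof. by move=> Pg Hg st; apply: ereal_inf_lbound; exists g. Qed.

Lemma lfp_glb (h : runtime) :
  (forall g, nonneg g -> rle (Phi g) g -> rle h g) -> rle h (lfp Phi).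
Proof.
by move=> H st; apply: le_ereal_inf_tmp => _ [g [Pg Hg] <-]; apply: H.
Qed.

Lemma lfp_ge0 : nonneg (lfp Phi).
Proof. by move=> st; apply: (@lfp_glb (fun _ => 0)) => g Pg _ st'; apply: Pg. Qed.

Hypothesis Pmono : forall f g, nonneg f -> nonneg g -> rle f g -> rle (Phi f) (Phi g).

Lemma lfp_fix : rle (Phi (lfp Phi)) (lfp Phi).
Proof.
apply: lfp_glb => g Pg Hg st; apply: le_trans (Hg st).
by apply: Pmono => //; [exact: lfp_ge0|exact: lfp_lb].
Qed.

Hypothesis Ppos : forall f, nonneg f -> nonneg (Phi f).

Definition kit k := iter k Phi (fun _ => 0).

Lemma kit_ge0 k : nonneg (kit k).
Proof. by elim: k => [|k IH] st //=; apply: Ppos. Qed.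

Lemma kit_chain : chain kit.
Proof.
split; first exact: kit_ge0.
elim=> [|k IH] st /=; first exact: Ppos.
by apply: Pmono => //; [exact: kit_ge0|exact: (kit_ge0 k.+1)].
Qed.

Lemma kit_le g : nonneg g -> rle (Phi g) g -> forall k, rle (kit k) g.
Proof.
move=> Pg Hg; elim=> [|k IH] st //=; apply: le_trans (Hg st).
by apply: Pmono => //; exact: kit_ge0.
Qed.

Hypothesis Pcont : forall F, chain F -> forall st, Phi (supT F) st = esup (fun n => Phi (F n) st).

Lemma lfp_kleene st : lfp Phi st = esup (fun k => kit k st).
Proof.
apply/eqP; rewrite eq_le; apply/andP; split.
- apply: (@lfp_lb (supT kit)); first exact: supT_ge0 kit_chain.
  move=> st'; rewrite Pcont; last exact: kit_chain.
  change (esup (fun n => kit n.+1 st') <= esup (fun n => kit n st')).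
  by rewrite (@esup_shift _ (fun n => kit n st')) //; apply: chain_nd kit_chain.
- apply: (@lfp_glb (supT kit)) => g Pg Hg st'.
  by apply: esup_le => k; apply: kit_le.
Qed.
End Lfp.

Definition Phi (T : runtime -> runtime) (phi : bexp Vars) (f g : runtime) : runtime :=
  fun st => iverson R (~~ phi st.1) * f st + iverson R (phi st.1) * T g st.

Lemma PhiE T phi f g st : Phi T phi f g st = if phi st.1 then T g st else f st.
Proof. by rewrite /Phi addeC iteE. Qed.

Lemma good_while (phi : bexp Vars) (T : runtime -> runtime) : good T ->
  good (fun f => lfp (Phi T phi f)).
Proof.
move=> GT; have [P M C A K] := GT.
have Pm f : forall g g', nonneg g -> nonneg g' -> rle g g' -> rle (Phi T phi f g) (Phi T phi f g').
  by move=> g g' Pg Pg' gg' st; rewrite !PhiE; case: (phi st.1) => //; apply: M.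
have Pp f : nonneg f -> forall g, nonneg g -> nonneg (Phi T phi f g).
  by move=> Pf g Pg st; rewrite PhiE; case: (phi st.1); [apply: P|apply: Pf].
have Pc f : forall F, chain F -> forall st,
    Phi T phi f (supT F) st = esup (fun n => Phi T phi f (F n) st).
  move=> F HF st; rewrite PhiE; under eq_fun do rewrite PhiE.
  by case: (phi st.1); [apply: C|rewrite esup_cst].
split.
- by move=> f _; apply: lfp_ge0.
- move=> f g Pf Pg fg; apply: lfp_glb => X PX HX; apply: lfp_lb => // st.
  apply: le_trans (HX st); rewrite !PhiE; case: (phi st.1) => //; exact: fg.
- move=> F HF st.
  have PF n : nonneg (F n) by apply: HF.1.
  set Ph := Phi T phi.
  have KG f k : nonneg f -> nonneg (kit (Ph f) k).
    by move=> Pf; apply: kit_ge0; apply: Pp.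
  have mk k n : rle (kit (Ph (F n)) k) (kit (Ph (F n.+1)) k).
    elim: k => [|k IH] st' //=; rewrite /Ph !PhiE; case: (phi st'.1).
    + by apply: M => //; apply: KG.
    + exact: HF.2.
  have chk k : chain (fun n => kit (Ph (F n)) k).
    by split=> n; [apply: KG|apply: mk].
  have Ek k : kit (Ph (supT F)) k = supT (fun n => kit (Ph (F n)) k).
    elim: k => [|k IH]; apply: funext => st' /=.
      by rewrite /supT; change ((0 : \bar R) = esup (fun _ : nat => (0 : \bar R))); rewrite esup_cst.
    rewrite IH /Ph PhiE.
    rewrite [RHS](_ : _ = esup (fun n => if phi st'.1 then T (kit (Phi T phi (F n)) k) st' else F n st')); last first.
      by rewrite /supT /esup; congr ereal_sup; congr image; apply: funext => n; rewrite PhiE.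
    by case: (phi st'.1); [apply: C|].
  rewrite (lfp_kleene (Pm _) (Pp _ (supT_ge0 HF)) (Pc _)).
  have -> : (fun n => lfp (Ph (F n)) st) = (fun n => esup (fun k => kit (Ph (F n)) k st)).
    by apply: funext => n; rewrite (lfp_kleene (Pm _) (Pp _ (PF n)) (Pc _)).
  rewrite -esup_swap; congr esup; apply: funext => k.
  by rewrite Ek.
- move=> f g Pf Pg; apply: lfp_lb.
    by apply: radd_ge0; apply: lfp_ge0.
  move=> st; rewrite PhiE /radd.
  apply: le_trans (leeD (lfp_fix (Pm f) st) (lfp_fix (Pm g) st)); rewrite !PhiE.
  case: (phi st.1) => //; apply: A; exact: lfp_ge0.
- move=> u f u0 Pf; apply: lfp_lb.
    by apply: radd_ge0 => //; apply: lfp_ge0.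
  move=> st; rewrite PhiE /radd.
  apply: le_trans (leeD2l u (lfp_fix (Pm f) st)); rewrite !PhiE.
  case: (phi st.1) => //; apply: K => //; exact: lfp_ge0.
Qed.

Lemma tm_ge0 (e : aexp Vars) : nonneg (tm R e).
Proof. by move=> st; rewrite /tm; case: asboolP => _ //; rewrite lee_fin. Qed.

Lemma tm_precise (e : aexp Vars) : precise (tm R e).
Proof.
apply: (@precise_of _ (fun _ _ _ => None)) => s h h1 h2 S.
by rewrite /tm /=; case: asboolP => // He _ l; apply: He.
Qed.

Lemma pointsto_zo (e e' : aexp Vars) : zo (pointsto R e e').
Proof. by move=> st; rewrite /pointsto; case: asboolP => _; [left|right]. Qed.

Lemma pointsto_precise (e e' : aexp Vars) : precise (pointsto R e e').
Proof.
apply: (@precise_of _ (fun s _ l => if l == e s then Some (e' s) else None)) => s h h1 h2 S.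
by rewrite /pointsto /=; case: asboolP => // He _ l; apply: He.
Qed.

Lemma pointsto_any_ge0 (e : aexp Vars) : nonneg (pointsto_any R e).
Proof. by move=> st; rewrite /pointsto_any; case: asboolP. Qed.

Lemma pointsto_any_precise (e : aexp Vars) : precise (pointsto_any R e).
Proof.
apply: (@precise_of _ (fun s h l => if l == e s then hfun h l else None)) => s h h1 h2 [D U].
rewrite /pointsto_any /=; case: asboolP => // -[He1 He2] _ l.
case: eqP => [->|/He1 //]; rewrite U.
by case: (hfun h1 (e s)) He2.
Qed.

Lemma emp_zo : zo (emp R (Vars:=Vars)).
Proof. by move=> st; rewrite /emp; case: asboolP => _; [left|right]. Qed.

Lemma sepsum_zo n (F : nat -> runtime) : (forall i, zo (F i)) -> zo (sepsum n F).
Proof.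
move=> ZF; elim: n => [|n IH] /=; first exact: emp_zo.
exact: sepadd_zo.
Qed.

Lemma bigsep_zo (e : aexp Vars) (F : nat -> runtime) : (forall i, zo (F i)) -> zo (bigsep e F).
Proof. by move=> ZF st; apply: sepsum_zo. Qed.

Lemma inf_nat_one (X : nat -> runtime) st v0 :
  (forall v, v != v0 -> X v st = +oo) -> inf_nat X st = X v0 st.
Proof.
move=> H; apply/eqP; rewrite eq_le; apply/andP; split.
  by apply: ereal_inf_lbound; exists v0.
apply: le_ereal_inf_tmp => _ [v _ <-].
by have [->|/H ->] := eqVneq v v0; rewrite ?leey.
Qed.

Lemma good_lookup x (e : aexp Vars) : good (ert (Lookup x e) : runtime -> runtime).
Proof.
pose S v := fun f : runtime => sepadd (pointsto R e (fun _ => v))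
   (wand (pointsto R e (fun _ => v)) (subst f x (fun _ => v))).
apply: (@good_pointwise nat S _ (fun st => odflt 0%N (hfun st.2 (e st.1)))).
- move=> v; apply: good_sepadd.
  + exact: pointsto_precise.
  + exact: zo_ge0 (pointsto_zo _ _).
  + apply: good_wand; [exact: pointsto_zo|exact: good_subst].
- move=> f Pf st /=; apply: inf_nat_one => v Hv.
  apply: sepadd_oo; first exact: wand_ge0.
  move=> h1 h2 [D U]; move: (pointsto_zo e (fun _ => v) (st.1, h1)) => [E|//].
  move: E; rewrite /pointsto; case: asboolP => // He _.
  have := U (e st.1); move: (He (e st.1)) => /= ->; rewrite eqxx => E'.
  by move: Hv; rewrite E' /= eqxx.
Qed.

Lemma good_ert (C : prog Vars) : prog_wf C -> good (ert C : runtime -> runtime).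
Proof.
elim: C => [e|x e|x e|e e'|x e|e|C1 IH1 p C2 IH2|phi C1 IH1 C2 IH2|C1 IH1 C2 IH2|phi C1 IH1] /=.
- move=> _; apply: (@good_sepadd _ id); [exact: tm_precise|exact: tm_ge0|exact: good_id].
- by move=> _; apply: good_subst.
- move=> _; apply: good_supnat => v; apply: good_wand; last exact: good_subst.
  by apply: bigsep_zo => i; apply: pointsto_zo.
- move=> _; apply: (@good_sepadd _ (fun f => wand (pointsto R e e') f)).
  + exact: pointsto_any_precise.
  + exact: pointsto_any_ge0.
  + apply: good_wand; [exact: pointsto_zo|exact: good_id].
- by move=> _; apply: good_lookup.
- move=> _; apply: (@good_sepadd _ id); [exact: pointsto_any_precise|exact: pointsto_any_ge0|exact: good_id].
- move=> [Hp [W1 W2]].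
  apply: (@good_pchoice (fun s => ratr (p s))); [|exact: IH1|exact: IH2].
  move=> s; case/andP: (Hp s) => p0 p1.
  rewrite ler0q p0 /=; have : (ratr (p s) <= ratr 1 :> R)%R by rewrite ler_rat.
  by rewrite rmorph1.
- by move=> [W1 W2]; apply: good_ite; [exact: IH1|exact: IH2].
- by move=> [W1 W2]; apply: good_comp; [exact: IH1|exact: IH2].
- by move=> W; apply: good_while; exact: IH1.
Qed.
End Heaps.

Unset Implicit Arguments.

Theorem mainTheorem8 (R : realType) (Vars : finType) (C : prog Vars)
    (F : nat -> runtime R Vars) (f g : runtime R Vars) (u : \bar R) :
  prog_wf C ->
  (forall n, nonneg (F n)) -> (forall n, rle (F n) (F n.+1)) ->
  nonneg f -> nonneg g -> 0 <= u ->
  (forall st, ert C (supT F) st = ereal_sup (range (fun n => ert C (F n) st))) /\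
  (rle f g -> rle (ert C f) (ert C g)) /\
  rle (ert C (radd f g)) (radd (ert C f) (ert C g)) /\
  rle (ert C (radd (fun _ => u) f)) (radd (fun _ => u) (ert C f)).
Proof.
move=> W PF MF Pf Pg u0.
have [P M Cc A K] := good_ert R W.
split; first by move=> st; apply: Cc.
split; first by move=> fg; apply: M.
by split; [apply: A|apply: K].
Qed.
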